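(* For every integer $m\ge2$, \[ L_m:=\int\cdots\int_{W_m}\frac{dx_1\cdots dx_m}{x_1\cdots x_m}=m!\,\zeta(m)-(m-1)\ln^m2-m!\sum_{p=0}^{m-2}\frac{\ln^p2}{p!}\operatorname{Li}_{m-p}\!\left(\tfrac12\right). \]
   Context: $W_m:=\{(x_1,\dots,x_m)\in[0,1]^m : x_i+x_j\ge1 \text{ for all } 1\le i<j\le m\}$. The polylogarithm is $\operatorname{Li}_s(z):=\sum_{r=1}^\infty z^r/r^s$ for $|z|<1$; $\zeta$ is the Riemann zeta function. *)

(* Defs.v *)
From Stdlib Require Import Reals Lra Lia List ClassicalEpsilon.
Open Scope R_scope.

(* A point of R^m is represented by a list of reals of length m. *)

Definition InW (m : nat) (xs : list R) : Prop :=
  length xs = m /\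
  (forall i, (i < m)%nat -> 0 <= nth i xs 0 <= 1) /\
  (forall i j, (i < j)%nat -> (j < m)%nat -> 1 <= nth i xs 0 + nth j xs 0).

Definition prodR (xs : list R) : R := fold_right Rmult 1 xs.

Definition trunc_integrand (eps : R) (m : nat) (xs : list R) : R :=
  if excluded_middle_informative
       (InW m xs /\ forall i, (i < m)%nat -> eps <= nth i xs 0)
  then 1 / prodR xs else 0.

(* The first variable of the list is the outermost integration variable. *)
Fixpoint iter_int (n : nat) (F : list R -> R) (v : R) : Prop :=
  match n with
  | O => v = F nil
  | S k => exists g : R -> R,
      (forall t, 0 <= t <= 1 -> iter_int k (fun xs => F (t :: xs)) (g t)) /\
      exists pr : Riemann_integrable g 0 1, RiemannInt pr = v
  end.

(* L_m = l : the (improper) integral of 1/(x_1...x_m) over W_m equals l,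
   understood as the limit eps -> 0+ of the (proper, Riemann) integrals over
   W_m ∩ [eps,1]^m. *)
Definition Lm_is (m : nat) (l : R) : Prop :=
  (forall eps, 0 < eps -> exists v, iter_int m (trunc_integrand eps m) v) /\
  (forall e, 0 < e -> exists d, 0 < d /\
     forall eps v, 0 < eps < d -> iter_int m (trunc_integrand eps m) v ->
       Rabs (v - l) < e).

Definition is_zeta (s : nat) (z : R) : Prop :=
  infinite_sum (fun r => 1 / (INR (S r)) ^ s) z.

Definition is_Li_half (s : nat) (l : R) : Prop :=
  infinite_sum (fun r => (1/2) ^ (S r) / (INR (S r)) ^ s) l.

(* Main.v *)
Require Import Defs.
From Stdlib Require Import Reals Lra Lia List ClassicalEpsilon Factorial RList Arith.
Open Scope R_scope.

Lemma D_eqv f x l l' : derivable_pt_lim f x l -> l = l' -> derivable_pt_lim f x l'.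
Proof. intros H ->; exact H. Qed.
Lemma D_plus f g x a b : derivable_pt_lim f x a -> derivable_pt_lim g x b ->
  derivable_pt_lim (fun y => f y + g y) x (a + b).
Proof. intros; apply (derivable_pt_lim_plus f g); auto. Qed.
Lemma D_minus f g x a b : derivable_pt_lim f x a -> derivable_pt_lim g x b ->
  derivable_pt_lim (fun y => f y - g y) x (a - b).
Proof. intros; apply (derivable_pt_lim_minus f g); auto. Qed.
Lemma D_mult f g x a b : derivable_pt_lim f x a -> derivable_pt_lim g x b ->
  derivable_pt_lim (fun y => f y * g y) x (a * g x + f x * b).
Proof. intros; apply (derivable_pt_lim_mult f g); auto. Qed.
Lemma D_opp f x a : derivable_pt_lim f x a -> derivable_pt_lim (fun y => - f y) x (- a).
Proof. intros; apply (derivable_pt_lim_opp f); auto. Qed.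
Lemma D_const c x : derivable_pt_lim (fun _ => c) x 0.
Proof. apply (derivable_pt_lim_const c). Qed.
Lemma D_id x : derivable_pt_lim (fun y => y) x 1.
Proof. apply derivable_pt_lim_id. Qed.
Lemma D_comp f g x a b : derivable_pt_lim f x a -> derivable_pt_lim g (f x) b ->
  derivable_pt_lim (fun y => g (f y)) x (b * a).
Proof. intros; apply (derivable_pt_lim_comp f g); auto. Qed.
Lemma D_pow f x a n : derivable_pt_lim f x a ->
  derivable_pt_lim (fun y => f y ^ n) x (INR n * f x ^ pred n * a).
Proof. intros H. apply (D_comp f (fun y => y ^ n)); auto. apply derivable_pt_lim_pow. Qed.
Lemma D_ln f x a : derivable_pt_lim f x a -> 0 < f x ->
  derivable_pt_lim (fun y => ln (f y)) x (/ f x * a).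
Proof. intros H p. apply (D_comp f ln); auto. apply derivable_pt_lim_ln; auto. Qed.
Lemma D_cont f x l : derivable_pt_lim f x l -> continuity_pt f x.
Proof. intros H. apply (derivable_continuous_pt f x (exist _ l H)). Qed.

Lemma C_comp f g x : continuity_pt f x -> continuity_pt g (f x) -> continuity_pt (fun y => g (f y)) x.
Proof. intros; apply (continuity_pt_comp f g); auto. Qed.
Lemma C_mult f g x : continuity_pt f x -> continuity_pt g x -> continuity_pt (fun y => f y * g y) x.
Proof. intros; apply (continuity_pt_mult f g); auto. Qed.
Lemma C_plus f g x : continuity_pt f x -> continuity_pt g x -> continuity_pt (fun y => f y + g y) x.
Proof. intros; apply (continuity_pt_plus f g); auto. Qed.
Lemma C_minus f g x : continuity_pt f x -> continuity_pt g x -> continuity_pt (fun y => f y - g y) x.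
Proof. intros; apply (continuity_pt_minus f g); auto. Qed.
Lemma C_div f g x : continuity_pt f x -> continuity_pt g x -> g x <> 0 -> continuity_pt (fun y => f y / g y) x.
Proof. intros; apply (continuity_pt_div f g); auto. Qed.
Lemma C_const c x : continuity_pt (fun _ => c) x.
Proof. apply continuity_pt_const; intros u v; reflexivity. Qed.
Lemma C_id x : continuity_pt (fun y => y) x.
Proof. apply (D_cont _ _ _ (D_id x)). Qed.
Lemma C_pow f x n : continuity_pt f x -> continuity_pt (fun y => f y ^ n) x.
Proof. intros H. apply (C_comp f (fun y => y ^ n)); auto. apply (D_cont _ _ _ (derivable_pt_lim_pow _ n)). Qed.
Lemma C_ln f x : continuity_pt f x -> 0 < f x -> continuity_pt (fun y => ln (f y)) x.
Proof. intros H p. apply (C_comp f ln); auto. apply (D_cont _ _ _ (derivable_pt_lim_ln _ p)). Qed.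
Lemma C_abs f x : continuity_pt f x -> continuity_pt (fun y => Rabs (f y)) x.
Proof. intros H. apply (C_comp f Rabs); auto. apply Rcontinuity_abs. Qed.

Definition RI (f : R -> R) (a b : R) : R :=
  epsilon (inhabits 0) (fun v => exists pr : Riemann_integrable f a b, RiemannInt pr = v).

Lemma RI_eq f a b (pr : Riemann_integrable f a b) : RI f a b = RiemannInt pr.
Proof.
  unfold RI.
  destruct (epsilon_spec (inhabits 0)
     (fun v => exists pr : Riemann_integrable f a b, RiemannInt pr = v)
     (ex_intro _ (RiemannInt pr) (ex_intro _ pr eq_refl))) as [pr' H].
  rewrite <- H. apply RiemannInt_P5.
Qed.

Definition CO f a b := forall x, a <= x <= b -> continuity_pt f x.

Lemma RI_int f a b : a <= b -> CO f a b -> Riemann_integrable f a b.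
Proof. intros; apply continuity_implies_RiemannInt; auto. Qed.

Lemma RI_chasles f a b c : Riemann_integrable f a b -> Riemann_integrable f b c ->
  RI f a c = RI f a b + RI f b c.
Proof.
  intros p1 p2. rewrite (RI_eq _ _ _ p1), (RI_eq _ _ _ p2), (RI_eq _ _ _ (RiemannInt_P24 p1 p2)).
  symmetry; apply RiemannInt_P26.
Qed.

Lemma RI_swap f a b : Riemann_integrable f a b -> RI f b a = - RI f a b.
Proof.
  intros p. rewrite (RI_eq _ _ _ p), (RI_eq _ _ _ (RiemannInt_P1 p)). apply RiemannInt_P8.
Qed.

Lemma RI_ext_open f g a b : a <= b -> Riemann_integrable f a b -> Riemann_integrable g a b ->
  (forall x, a < x < b -> f x = g x) -> RI f a b = RI g a b.
Proof.
  intros h p1 p2 H. rewrite (RI_eq _ _ _ p1), (RI_eq _ _ _ p2). apply RiemannInt_P18; auto.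
Qed.

Lemma ri_ext f g a b : a <= b -> Riemann_integrable f a b ->
  (forall x, a <= x <= b -> f x = g x) -> Riemann_integrable g a b.
Proof.
  intros h p H. refine (@Riemann_integrable_ext f g a b _ p).
  intros x Hx. rewrite Rmin_left, Rmax_right in Hx; auto.
Qed.

Lemma RI_ext f g a b : a <= b -> Riemann_integrable f a b ->
  (forall x, a <= x <= b -> f x = g x) -> RI f a b = RI g a b.
Proof.
  intros h p H. apply RI_ext_open; auto. apply (ri_ext f); auto.
  intros; apply H; lra.
Qed.

Lemma RI_lin f g a b l : Riemann_integrable f a b -> Riemann_integrable g a b ->
  RI (fun x => f x + l * g x) a b = RI f a b + l * RI g a b.
Proof.
  intros p1 p2. rewrite (RI_eq _ _ _ p1), (RI_eq _ _ _ p2), (RI_eq _ _ _ (RiemannInt_P10 l p1 p2)).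
  apply RiemannInt_P13.
Qed.

Lemma ri_lin f g a b l : Riemann_integrable f a b -> Riemann_integrable g a b ->
  Riemann_integrable (fun x => f x + l * g x) a b.
Proof. intros; apply RiemannInt_P10; auto. Qed.

Lemma RI_le f g a b : a <= b -> Riemann_integrable f a b -> Riemann_integrable g a b ->
  (forall x, a < x < b -> f x <= g x) -> RI f a b <= RI g a b.
Proof.
  intros h p1 p2 H. rewrite (RI_eq _ _ _ p1), (RI_eq _ _ _ p2). apply RiemannInt_P19; auto.
Qed.

Lemma RI_FTC f F a b : a <= b -> CO f a b ->
  (forall x, a <= x <= b -> derivable_pt_lim F x (f x)) -> RI f a b = F b - F a.
Proof.
  intros h C0 HF.
  pose (pr := FTC_P1 h C0).
  assert (A1 := @RiemannInt_P29 f a b h C0).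
  assert (A2 : antiderivative f F a b).
  { split; auto. intros x Hx. exists (exist _ (f x) (HF x Hx)). reflexivity. }
  destruct (antiderivative_Ucte f _ _ a b A1 A2) as [c Hc].
  rewrite (RI_eq _ _ _ (RI_int f a b h C0)).
  rewrite (@RiemannInt_P20 f a b h pr).
  fold pr in Hc. rewrite (Hc b), (Hc a); lra.
Qed.

Lemma ri_in f lo hi u v : CO f lo hi -> lo <= u <= hi -> lo <= v <= hi -> Riemann_integrable f u v.
Proof.
  intros C Hu Hv. destruct (Rle_dec u v).
  - apply RI_int; auto. intros x Hx; apply C; lra.
  - apply RiemannInt_P1. apply RI_int; [lra|]. intros x Hx; apply C; lra.
Qed.

Lemma D_RI f lo hi c x : (forall y, lo < y < hi -> continuity_pt f y) ->
  lo < c < hi -> lo < x < hi -> derivable_pt_lim (fun y => RI f c y) x (f x).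
Proof.
  intros C Hc Hx.
  set (a' := (lo + Rmin c x)/2). set (b' := (hi + Rmax c x)/2).
  assert (Ha : lo < a' /\ a' < Rmin c x) by (unfold a', Rmin; destruct (Rle_dec c x); lra).
  assert (Hb : Rmax c x < b' /\ b' < hi) by (unfold b'; unfold Rmax in *; destruct (Rle_dec c x); lra).
  assert (Hmc := Rmin_l c x). assert (Hmx := Rmin_r c x).
  assert (HMc := Rmax_l c x). assert (HMx := Rmax_r c x).
  assert (h : a' <= b') by lra.
  assert (C0 : CO f a' b') by (intros y Hy; apply C; lra).
  set (prim := primitive h (FTC_P1 h C0)).
  assert (Dp : derivable_pt_lim prim x (f x)) by (apply RiemannInt_P27; lra).
  apply (derivable_pt_lim_locally_ext (fun y => prim y - prim c) _ x a' b').
  - lra.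
  - intros z Hz. unfold prim, primitive.
    destruct (Rle_dec a' z); [|lra]. destruct (Rle_dec z b'); [|lra].
    destruct (Rle_dec a' c); [|lra]. destruct (Rle_dec c b'); [|lra].
    rewrite <- !RI_eq.
    rewrite (RI_chasles f a' c z); [ring| |]; apply (ri_in f a' b'); auto; lra.
  - apply (D_eqv _ _ (f x - 0)); [|ring]. apply D_minus; auto. apply D_const.
Qed.

Lemma D_RI_l f lo hi c x : (forall y, lo < y < hi -> continuity_pt f y) ->
  lo < c < hi -> lo < x < hi -> derivable_pt_lim (fun y => RI f y c) x (- f x).
Proof.
  intros C Hc Hx.
  assert (D := D_opp _ _ _ (D_RI f lo hi c x C Hc Hx)).
  apply (derivable_pt_lim_locally_ext _ (fun y => RI f y c) x lo hi _ Hx) in D; auto.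
  intros z Hz. rewrite (RI_swap f c z); auto.
  apply (ri_in f (Rmin c z) (Rmax c z)).
  - intros y Hy; apply C. unfold Rmin, Rmax in Hy; destruct (Rle_dec c z); lra.
  - unfold Rmin, Rmax; destruct (Rle_dec c z); lra.
  - unfold Rmin, Rmax; destruct (Rle_dec c z); lra.
Qed.

Lemma jump_adapted f lo hi : lo <= hi -> (forall t, lo < t < hi -> f t = 0) ->
  adapted_couple f lo hi (cons lo (cons hi nil)) (cons 0 nil).
Proof.
  intros H Hf; unfold adapted_couple; repeat split.
  - unfold ordered_Rlist; intros; simpl in H0; inversion H0;
      [ simpl; assumption | elim (Nat.nle_succ_0 _ H2) ].
  - simpl; unfold Rmin; decide (Rle_dec lo hi) with H; reflexivity.
  - simpl; unfold Rmax; decide (Rle_dec lo hi) with H; reflexivity.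
  - unfold constant_D_eq, open_interval; intros; simpl in H0.
    inversion H0; [ subst; simpl in *; apply Hf; auto | elim (Nat.nle_succ_0 _ H3) ].
Qed.

Lemma ri_jump f lo hi : lo <= hi -> (forall t, lo < t < hi -> f t = 0) ->
  Riemann_integrable f lo hi.
Proof.
  intros H Hf eps.
  assert (S : IsStepFun f lo hi).
  { exists (cons lo (cons hi nil)). exists (cons 0 nil). apply jump_adapted; auto. }
  exists (mkStepFun S). exists (mkStepFun (StepFun_P4 lo hi 0)). split.
  - intros t _. simpl. unfold fct_cte. rewrite Rminus_diag, Rabs_R0. lra.
  - rewrite StepFun_P18, Rmult_0_l, Rabs_R0. apply cond_pos.
Qed.

Lemma RI_zero f a b : a <= b -> Riemann_integrable f a b -> (forall t, a < t < b -> f t = 0) -> RI f a b = 0.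
Proof.
  intros h p Hf. rewrite (RI_ext_open f (fun _ => 0) a b h p); auto.
  - rewrite (RI_FTC (fun _ => 0) (fun _ => 0) a b h). ring.
    + intros x _; apply continuity_pt_const; intros u v; reflexivity.
    + intros; apply D_const.
  - apply ri_jump; auto.
Qed.

Lemma RI_refl f a : RI f a a = 0.
Proof. rewrite (RI_eq _ _ _ (RiemannInt_P7 f a)). apply RiemannInt_P9. Qed.

Lemma RI_const0 a b : RI (fun _ => 0) a b = 0.
Proof.
  change (RI (fct_cte 0) a b = 0).
  rewrite (RI_eq _ _ _ (RiemannInt_P14 a b 0)).
  rewrite (RiemannInt_P15 (RiemannInt_P14 a b 0)). ring.
Qed.

Lemma RI_scal f a b l : a <= b -> Riemann_integrable f a b ->
  RI (fun x => l * f x) a b = l * RI f a b.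
Proof.
  intros h p.
  rewrite (RI_ext (fun x => l * f x) (fun x => 0 + l * f x) a b h).
  - rewrite (RI_lin (fun _ => 0) f a b l (RiemannInt_P14 a b 0) p). rewrite RI_const0. ring.
  - apply Riemann_integrable_scal; auto.
  - intros; ring.
Qed.

Definition mx (x : R) := (1 + Rabs (2*x-1))/2.
Lemma mx_ge x : 1/2 <= x -> mx x = x.
Proof. intros; unfold mx; rewrite Rabs_right; lra. Qed.
Lemma mx_le x : x <= 1/2 -> mx x = 1 - x.
Proof. intros; unfold mx; rewrite Rabs_left1; lra. Qed.
Lemma mx_pos x : 1/2 <= mx x.
Proof. unfold mx; generalize (Rabs_pos (2*x-1)); lra. Qed.

Lemma mx_cont x : continuity_pt mx x.
Proof.
  unfold mx. apply (C_div (fun y => 1 + Rabs (2*y-1)) (fun _ => 2)); [| apply C_const | lra].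
  apply (C_plus (fun _ => 1) (fun y => Rabs (2*y-1))); [apply C_const|].
  apply (C_abs (fun y => 2*y-1)).
  apply (C_minus (fun y => 2*y) (fun _ => 1)); [|apply C_const].
  apply (C_mult (fun _ => 2) (fun y => y)); [apply C_const | apply C_id].
Qed.

Definition phi (k : nat) (x : R) := (- ln (mx x)) ^ k / x.

Lemma phi_cont k x : 0 < x -> continuity_pt (phi k) x.
Proof.
  intros Hx. unfold phi.
  apply (C_div (fun y => (- ln (mx y)) ^ k) (fun y => y)); [| apply C_id | lra].
  apply (C_pow (fun y => - ln (mx y))).
  apply (C_comp (fun y => ln (mx y)) (fun u => - u)).
  - apply (C_ln mx); [apply mx_cont|]. generalize (mx_pos x); lra.
  - apply (D_cont _ _ _ (D_opp _ _ _ (D_id _))).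
Qed.

Definition Hf (n : nat) (b : R) := (ln 2)^n + INR n * RI (phi (pred n)) b (1/2).

Lemma D_Hf n x : 0 < x -> derivable_pt_lim (Hf n) x (- INR n * phi (pred n) x).
Proof.
  intros Hx. unfold Hf.
  apply (D_eqv _ _ (0 + (0 * RI (phi (pred n)) x (1/2) + INR n * - phi (pred n) x))); [|ring].
  apply (D_plus (fun _ => ln 2 ^ n) (fun b => INR n * RI (phi (pred n)) b (1/2))); [apply D_const|].
  apply (D_mult (fun _ => INR n) (fun b => RI (phi (pred n)) b (1/2))); [apply D_const|].
  apply (D_RI_l _ 0 (x+1)); try lra.
  intros; apply phi_cont; lra.
Qed.

Lemma Hf_cont n x : 0 < x -> continuity_pt (Hf n) x.
Proof. intros; eapply D_cont; apply D_Hf; auto. Qed.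

Lemma ln_half : ln (1/2) = - ln 2.
Proof. replace (1/2) with (/2) by field. apply ln_Rinv; lra. Qed.

Lemma Hf_big n b : 1/2 <= b -> Hf n b = (- ln b)^n.
Proof.
  intros Hb. destruct n as [|n].
  { unfold Hf; simpl; ring. }
  unfold Hf. simpl pred.
  assert (C0 : CO (phi n) (1/2) b) by (intros y Hy; apply phi_cont; lra).
  assert (p : Riemann_integrable (phi n) (1/2) b) by (apply RI_int; auto).
  rewrite (RI_swap _ _ _ p).
  assert (E : RI (fun y => INR (S n) * phi n y) (1/2) b = (fun y => - (- ln y)^(S n)) b - (fun y => - (- ln y)^(S n)) (1/2)).
  { apply (RI_FTC _ (fun y => - (- ln y)^(S n))); [lra| |].
    - intros y Hy. apply (C_mult (fun _ => INR (S n)) (phi n)); [apply C_const|]. apply phi_cont; lra.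
    - intros y Hy.
      eapply D_eqv.
      + apply (D_opp (fun y => (- ln y)^(S n))).
        apply (D_pow (fun y => - ln y)).
        apply (D_opp (fun y => ln y)).
        apply (D_ln (fun y => y)); [apply D_id| lra].
      + unfold phi. rewrite mx_ge by lra. simpl pred. field. lra. }
  rewrite RI_scal in E; [|lra|auto]. rewrite ln_half in E.
  replace (INR (S n) * - RI (phi n) (1/2) b) with (- (INR (S n) * RI (phi n) (1/2) b)) by ring.
  rewrite E. replace (- - ln 2) with (ln 2) by ring. ring.
Qed.

Definition hK n t := Hf n (1 - t) / t.

Lemma hK_cont n t : 0 < t < 1 -> continuity_pt (hK n) t.
Proof.
  intros Ht. unfold hK.
  apply (C_div (fun t => Hf n (1 - t)) (fun t => t)); [|apply C_id|lra].
  apply (C_comp (fun t => 1 - t) (Hf n)).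
  - apply (C_minus (fun _ => 1) (fun t => t)); [apply C_const|apply C_id].
  - apply Hf_cont; lra.
Qed.

Definition Kf n y := RI (hK n) y (1 - y) + Hf n y * (- ln (1 - y)).

Lemma D_Kf n y : 0 < y < 1 ->
  derivable_pt_lim (Kf n) y
   (hK n (1 - y) * (0 - 1) - hK n y +
    ((- INR n * phi (pred n) y) * (- ln (1 - y)) + Hf n y * (- (/ (1 - y) * (0 - 1))))).
Proof.
  intros Hy.
  assert (Ch : forall u, 0 < u < 1 -> continuity_pt (hK n) u) by (intros; apply hK_cont; auto).
  apply (derivable_pt_lim_locally_ext
     (fun z => (RI (hK n) (1/2) (1 - z) - RI (hK n) (1/2) z) + Hf n z * (- ln (1 - z))) _ y 0 1); [lra| |].
  - intros z Hz. unfold Kf. f_equal.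
    assert (CO (hK n) (Rmin z (1-z)) (Rmax z (1-z))).
    { intros u Hu. apply Ch. unfold Rmin, Rmax in Hu; destruct (Rle_dec z (1-z)); lra. }
    assert (Hm : Rmin z (1-z) <= 1/2 <= Rmax z (1-z)) by (unfold Rmin, Rmax; destruct (Rle_dec z (1-z)); lra).
    assert (Hz1 : Rmin z (1-z) <= z <= Rmax z (1-z)) by (unfold Rmin, Rmax; destruct (Rle_dec z (1-z)); lra).
    assert (Hz2 : Rmin z (1-z) <= 1 - z <= Rmax z (1-z)) by (unfold Rmin, Rmax; destruct (Rle_dec z (1-z)); lra).
    rewrite (RI_chasles (hK n) z (1/2) (1-z)); [| apply (ri_in _ _ _ _ _ H); auto; lra ..].
    rewrite (RI_swap (hK n) (1/2) z); [ring|]. apply (ri_in _ _ _ _ _ H); auto; lra.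
  - apply D_plus; [apply D_minus|].
    + apply (D_comp (fun z => 1 - z) (fun u => RI (hK n) (1/2) u)).
      * apply (D_minus (fun _ => 1) (fun z => z)); [apply D_const|apply D_id].
      * apply (D_RI _ 0 1); auto; lra.
    + apply (D_RI _ 0 1); auto; lra.
    + apply (D_mult (Hf n) (fun z => - ln (1 - z))); [apply D_Hf; lra|].
      apply (D_opp (fun z => ln (1 - z))).
      apply (D_ln (fun z => 1 - z)); [|lra].
      apply (D_minus (fun _ => 1) (fun z => z)); [apply D_const|apply D_id].
Qed.

Lemma pow_pred_mult n L : INR n * L ^ pred n * L = INR n * L ^ n.
Proof. destruct n; simpl; ring. Qed.

Lemma Kf_Hf n a : 0 < a <= 1/2 -> Kf n a = Hf (S n) a.
Proof.
  intros Ha.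
  assert (E : RI (fun _ => 0) a (1/2) = (fun y => Kf n y - Hf (S n) y) (1/2) - (fun y => Kf n y - Hf (S n) y) a).
  { apply (RI_FTC _ (fun y => Kf n y - Hf (S n) y)); [lra| intros x _; apply C_const |].
    intros y Hy. eapply D_eqv.
    - apply (D_minus (Kf n) (Hf (S n))); [apply D_Kf; lra | apply D_Hf; lra].
    - unfold hK. replace (1 - (1 - y)) with y by ring.
      rewrite (Hf_big n (1 - y)) by lra. unfold phi. rewrite !mx_le by lra.
      simpl pred.
      replace (- INR n * ((- ln (1 - y)) ^ pred n / y) * - ln (1 - y))
        with (- (INR n * (- ln (1 - y)) ^ pred n * - ln (1 - y)) / y) by (field; lra).
      rewrite pow_pred_mult. rewrite S_INR. field. lra. }
  rewrite RI_const0 in E. simpl in E.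
  unfold Kf in E. replace (1 - 1/2) with (1/2) in E by field. rewrite RI_refl in E.
  rewrite !Hf_big in E by lra. rewrite ln_half in E.
  replace (- - ln 2) with (ln 2) in E by ring. simpl in E. unfold Kf. rewrite (Rmult_comm (ln 2 ^ n)) in E. lra.
Qed.

Definition gstep n a c t := if Rle_dec a t then c / t * Hf n (Rmax a (1 - t)) else 0.

Definition gA n a c t := c * Hf n a / t.
Definition gB n c t := c * hK n t.

Lemma gA_CO n a c lo hi : 0 < lo -> CO (gA n a c) lo hi.
Proof.
  intros H t Ht. unfold gA.
  apply (C_div (fun _ => c * Hf n a) (fun t => t)); [apply C_const|apply C_id|lra].
Qed.

Lemma gB_CO n c lo hi : 0 < lo -> hi < 1 -> CO (gB n c) lo hi.
Proof.
  intros H1 H2 t Ht. unfold gB.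
  apply (C_mult (fun _ => c) (hK n)); [apply C_const|apply hK_cont; lra].
Qed.

Lemma ri_gstep_l n a c : 0 < a -> Riemann_integrable (gstep n a c) 0 a.
Proof.
  intros Ha. apply ri_jump; [lra|]. intros t Ht. unfold gstep. destruct (Rle_dec a t); lra.
Qed.

Lemma gstep_A n a c t : a <= t -> 1 - t <= a -> gstep n a c t = gA n a c t.
Proof.
  intros H1 H2. unfold gstep, gA. destruct (Rle_dec a t); [|lra].
  rewrite Rmax_left by lra. unfold Rdiv; ring.
Qed.

Lemma gstep_B n a c t : a <= t -> a <= 1 - t -> gstep n a c t = gB n c t.
Proof.
  intros H1 H2. unfold gstep, gB, hK. destruct (Rle_dec a t); [|lra].
  rewrite Rmax_right by lra. unfold Rdiv; ring.
Qed.

Lemma ri_gstep_A n a c lo hi : 0 < a -> a <= lo <= hi -> 1 - lo <= a ->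
  Riemann_integrable (gstep n a c) lo hi.
Proof.
  intros Ha H1 H2. apply (ri_ext (gA n a c)); [lra| apply RI_int; [lra| apply gA_CO; lra] |].
  intros t Ht. symmetry; apply gstep_A; lra.
Qed.

Lemma ri_gstep_B n a c lo hi : 0 < a -> a <= lo <= hi -> hi <= 1 - a ->
  Riemann_integrable (gstep n a c) lo hi.
Proof.
  intros Ha H1 H2. apply (ri_ext (gB n c)); [lra| apply RI_int; [lra| apply gB_CO; lra] |].
  intros t Ht. symmetry; apply gstep_B; lra.
Qed.

Lemma ri_gstep_r n a c : 0 < a <= 1 -> Riemann_integrable (gstep n a c) a 1.
Proof.
  intros Ha. destruct (Rlt_le_dec a (1/2)).
  - apply (RiemannInt_P24 (b := 1 - a)).
    + apply ri_gstep_B; lra.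
    + apply ri_gstep_A; lra.
  - apply ri_gstep_A; lra.
Qed.

Lemma ri_gstep n a c : 0 < a <= 1 -> Riemann_integrable (gstep n a c) 0 1.
Proof.
  intros Ha. apply (RiemannInt_P24 (b := a)); [apply ri_gstep_l; lra | apply ri_gstep_r; auto].
Qed.

Lemma RI_gA n a c lo hi : 0 < lo <= hi -> RI (gA n a c) lo hi = c * Hf n a * (ln hi - ln lo).
Proof.
  intros H. rewrite (RI_FTC _ (fun t => c * Hf n a * ln t)); [ring|lra|apply gA_CO; lra|].
  intros t Ht. eapply D_eqv.
  - apply (D_mult (fun _ => c * Hf n a) ln); [apply D_const|apply derivable_pt_lim_ln; lra].
  - unfold gA. field. lra.
Qed.

Lemma RI_gstep n a c : 0 < a <= 1 -> RI (gstep n a c) 0 1 = c * Hf (S n) a.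
Proof.
  intros Ha.
  rewrite (RI_chasles _ 0 a 1 (ri_gstep_l n a c (proj1 Ha)) (ri_gstep_r n a c Ha)).
  rewrite (RI_zero _ 0 a) ; [| lra | apply ri_gstep_l; lra |].
  2:{ intros t Ht. unfold gstep. destruct (Rle_dec a t); lra. }
  destruct (Rlt_le_dec a (1/2)).
  - rewrite (RI_chasles _ a (1-a) 1); [| apply ri_gstep_B; lra | apply ri_gstep_A; lra].
    rewrite <- (RI_ext (gB n c) (gstep n a c) a (1-a)); [| lra | apply RI_int; [lra| apply gB_CO; lra] |].
    2:{ intros t Ht. symmetry; apply gstep_B; lra. }
    rewrite <- (RI_ext (gA n a c) (gstep n a c) (1-a) 1); [| lra | apply RI_int; [lra| apply gA_CO; lra] |].
    2:{ intros t Ht. symmetry; apply gstep_A; lra. }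
    rewrite RI_gA by lra. unfold gB.
    rewrite RI_scal; [| lra | apply RI_int; [lra | intros t Ht; apply hK_cont; lra]].
    rewrite <- Kf_Hf by lra. unfold Kf. rewrite ln_1. ring.
  - rewrite <- (RI_ext (gA n a c) (gstep n a c) a 1); [| lra | apply RI_int; [lra| apply gA_CO; lra] |].
    2:{ intros t Ht. symmetry; apply gstep_A; lra. }
    rewrite RI_gA by lra. rewrite !Hf_big by lra. rewrite ln_1. simpl. ring.
Qed.

Definition G n a c (xs : list R) : R :=
  if excluded_middle_informative (InW n xs /\ forall i, (i < n)%nat -> a <= nth i xs 0)
  then c / prodR xs else 0.

Lemma iter_ext n : forall F F' v, iter_int n F v ->
  (forall xs, length xs = n -> F xs = F' xs) -> iter_int n F' v.
Proof.
  induction n; simpl; intros F F' v H E.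
  - rewrite H. apply E; reflexivity.
  - destruct H as [g [Hg Hpr]]. exists g. split; auto.
    intros t Ht. apply (IHn _ _ _ (Hg t Ht)). intros xs Hl. apply E. simpl; rewrite Hl; reflexivity.
Qed.

Lemma iter_val n F v v' : iter_int n F v -> v = v' -> iter_int n F v'.
Proof. intros H <-; exact H. Qed.

Lemma G_zero n b xs : G n b 0 xs = 0.
Proof. unfold G; destruct excluded_middle_informative; unfold Rdiv; ring. Qed.

Lemma G_lt n a c t xs : t < a -> G (S n) a c (t :: xs) = 0.
Proof.
  intros H. unfold G; destruct excluded_middle_informative as [[_ H2]|]; auto.
  specialize (H2 0%nat (Nat.lt_0_succ n)). simpl in H2. lra.
Qed.

Lemma G_cons n a c t xs : 0 < a -> a <= t <= 1 -> length xs = n ->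
  G (S n) a c (t :: xs) = G n (Rmax a (1 - t)) (c / t) xs.
Proof.
  intros Ha Ht Hl. unfold G.
  assert (Equiv : (InW (S n) (t :: xs) /\ (forall i, (i < S n)%nat -> a <= nth i (t :: xs) 0)) <->
                  (InW n xs /\ (forall i, (i < n)%nat -> Rmax a (1 - t) <= nth i xs 0))).
  { unfold InW. split.
    - intros [[_ [H1 H2]] H3]. split; [split; [auto| split]|].
      + intros i Hi. apply (H1 (S i)). lia.
      + intros i j Hij Hj. apply (H2 (S i) (S j)); lia.
      + intros i Hi. apply Rmax_lub.
        * apply (H3 (S i)). lia.
        * specialize (H2 0%nat (S i) ltac:(lia) ltac:(lia)). simpl in H2. lra.
    - intros [[_ [H1 H2]] H3]. split; [split; [simpl; auto| split]|].
      + intros [|i] Hi; simpl; [lra|]. apply H1; lia.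
      + intros [|i] [|j] Hij Hj; simpl; try lia.
        * specialize (H3 j ltac:(lia)). generalize (Rmax_r a (1 - t)). lra.
        * apply H2; lia.
      + intros [|i] Hi; simpl; [lra|].
        specialize (H3 i ltac:(lia)). generalize (Rmax_l a (1 - t)). lra. }
  destruct (excluded_middle_informative (InW (S n) (t :: xs) /\ _)) as [h1|h1];
  destruct (excluded_middle_informative (InW n xs /\ _)) as [h2|h2].
  - simpl. unfold Rdiv. rewrite Rinv_mult. ring.
  - exfalso; apply h2; apply Equiv; auto.
  - exfalso; apply h1; apply Equiv; auto.
  - reflexivity.
Qed.

Lemma key n : forall a c, 0 < a <= 1 -> iter_int n (G n a c) (c * Hf n a).
Proof.
  induction n as [|n IHn]; intros a c Ha.
  - simpl. unfold G, Hf. destruct excluded_middle_informative as [h|h].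
    + simpl. field.
    + exfalso. apply h. split; [split; [reflexivity| split; intros; lia] | intros; lia].
  - simpl. exists (gstep n a c). split.
    + intros t Ht. unfold gstep. destruct (Rle_dec a t) as [h|h].
      * apply (iter_ext n (G n (Rmax a (1-t)) (c/t))).
        -- apply IHn. split.
           ++ generalize (Rmax_l a (1-t)); lra.
           ++ apply Rmax_lub; lra.
        -- intros xs Hl; symmetry; apply G_cons; auto; lra.
      * apply (iter_val _ _ (0 * Hf n a)); [|ring].
        apply (iter_ext n (G n a 0)); [apply IHn; auto|].
        intros xs Hl. rewrite G_zero, G_lt; auto; lra.
    + exists (ri_gstep n a c Ha). rewrite <- RI_eq. apply RI_gstep; auto.
Qed.

Lemma iter_zero n : iter_int n (fun _ => 0) 0.
Proof.
  induction n; simpl; [reflexivity|].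
  exists (fun _ => 0). split; [intros; auto|].
  exists (RiemannInt_P14 0 1 0). change (RiemannInt (RiemannInt_P14 0 1 0) = 0). rewrite RiemannInt_P15. ring.
Qed.

Lemma iter_big n a c : 1 < a -> iter_int (S n) (G (S n) a c) 0.
Proof.
  intros Ha. simpl. exists (fun _ => 0). split.
  - intros t Ht. apply (iter_ext n (fun _ => 0)); [apply iter_zero|].
    intros xs _. rewrite G_lt; auto; lra.
  - exists (RiemannInt_P14 0 1 0). change (RiemannInt (RiemannInt_P14 0 1 0) = 0). rewrite RiemannInt_P15. ring.
Qed.

Lemma iter_uniq n : forall F v1 v2, iter_int n F v1 -> iter_int n F v2 -> v1 = v2.
Proof.
  induction n; simpl; intros F v1 v2 H1 H2.
  - congruence.
  - destruct H1 as [g1 [H1 [p1 E1]]]; destruct H2 as [g2 [H2 [p2 E2]]]. subst.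
    apply RiemannInt_P18; [lra|]. intros x Hx.
    apply (IHn (fun xs => F (x :: xs))); [apply H1|apply H2]; lra.
Qed.

Lemma ln_le' x y : 0 < x -> x <= y -> ln x <= ln y.
Proof. intros h [H| ->]; [left; apply ln_increasing; auto | right; reflexivity]. Qed.

Lemma D_sum (F : nat -> R -> R) (f : nat -> R) x N :
  (forall i, (i <= N)%nat -> derivable_pt_lim (F i) x (f i)) ->
  derivable_pt_lim (fun y => sum_f_R0 (fun i => F i y) N) x (sum_f_R0 f N).
Proof.
  induction N; intros H; simpl.
  - apply H; lia.
  - apply (D_plus (fun y => sum_f_R0 (fun i => F i y) N) (F (S N))).
    + apply IHN; intros; apply H; lia.
    + apply H; lia.
Qed.

Lemma C_sum (F : nat -> R -> R) x N :
  (forall i, (i <= N)%nat -> continuity_pt (F i) x) ->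
  continuity_pt (fun y => sum_f_R0 (fun i => F i y) N) x.
Proof.
  induction N; intros H; simpl.
  - apply H; lia.
  - apply (C_plus (fun y => sum_f_R0 (fun i => F i y) N) (F (S N))).
    + apply IHN; intros; apply H; lia.
    + apply H; lia.
Qed.

Fixpoint P (r k : nat) (y : R) : R :=
  match k with
  | O => y ^ (S r) / INR (S r)
  | S k' => y ^ (S r) * (- ln y) ^ (S k') / INR (S r) + INR (S k') / INR (S r) * P r k' y
  end.

Lemma INR_S_pos r : 0 < INR (S r).
Proof. apply lt_0_INR; lia. Qed.

Lemma D_P r k y : 0 < y -> derivable_pt_lim (P r k) y (y ^ r * (- ln y) ^ k).
Proof.
  intros Hy. assert (HR := INR_S_pos r).
  induction k as [|k IH]; cbn [P].
  - eapply D_eqv.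
    + apply (D_mult (fun y => y ^ S r) (fun _ => / INR (S r))); [|apply D_const].
      apply (D_pow (fun y => y)). apply D_id.
    + simpl pred. simpl (_ ^ 0). field. lra.
  - eapply D_eqv.
    + apply (D_plus (fun y => y ^ S r * (- ln y) ^ S k / INR (S r))
                    (fun y => INR (S k) / INR (S r) * P r k y)).
      * apply (D_mult (fun y => y ^ S r * (- ln y) ^ S k) (fun _ => / INR (S r))); [|apply D_const].
        apply (D_mult (fun y => y ^ S r) (fun y => (- ln y) ^ S k)).
        -- apply (D_pow (fun y => y)). apply D_id.
        -- apply (D_pow (fun y => - ln y)). apply (D_opp (fun y => ln y)).
           apply derivable_pt_lim_ln; auto.
      * apply (D_mult (fun _ => INR (S k) / INR (S r)) (P r k)); [apply D_const| apply IH].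
    + simpl pred. simpl (_ ^ S r). simpl ((- ln y) ^ S k). field. lra.
Qed.

Lemma P_cont r k y : 0 < y -> continuity_pt (P r k) y.
Proof. intros; eapply D_cont; apply D_P; auto. Qed.

Lemma P_one r k : P r k 1 = INR (fact k) * (1 / INR (S r) ^ (S k)).
Proof.
  assert (HR := INR_S_pos r).
  induction k as [|k IH]; cbn [P].
  - rewrite pow1, pow_1. change (fact 0) with 1%nat. rewrite INR_1. field. lra.
  - rewrite IH, ln_1, pow1. replace (- 0) with 0 by ring. rewrite pow_i by lia.
    rewrite fact_simpl, mult_INR. rewrite <- !tech_pow_Rmult. field.
    split; [|lra]. apply pow_nonzero; lra.
Qed.

Definition Pc k p := (ln 2) ^ p * INR (fact k) / INR (fact p).
Definition Pa k p r := (1/2) ^ (S r) / INR (S r) ^ (S k - p).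

Lemma P_half r k : P r k (1/2) = sum_f_R0 (fun p => Pc k p * Pa k p r) k.
Proof.
  assert (HR := INR_S_pos r).
  induction k as [|k IH]; cbn [P].
  - unfold sum_f_R0, Pc, Pa. rewrite Nat.sub_0_r, !pow_1, pow_O. change (fact 0) with 1%nat. rewrite INR_1. field. lra.
  - rewrite IH. rewrite ln_half. replace (- - ln 2) with (ln 2) by ring.
    rewrite tech5.
    assert (Last : Pc (S k) (S k) * Pa (S k) (S k) r = ln 2 ^ S k * ((1/2)^(S r) / INR (S r))).
    { unfold Pc, Pa. replace (S (S k) - S k)%nat with 1%nat by lia. rewrite pow_1.
      assert (0 < INR (fact (S k))) by (apply lt_0_INR; apply lt_O_fact). field. lra. }
    rewrite Last, scal_sum.
    assert (E : sum_f_R0 (fun p => Pc k p * Pa k p r * (INR (S k) / INR (S r))) k =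
                sum_f_R0 (fun p => Pc (S k) p * Pa (S k) p r) k).
    { apply sum_eq. intros p Hp. unfold Pc, Pa.
      replace (S (S k) - p)%nat with (S (S k - p)) by lia.
      rewrite fact_simpl, mult_INR, <- !tech_pow_Rmult.
      assert (0 < INR (fact p)) by (apply lt_0_INR; apply lt_O_fact).
      field. split; [|split; lra]. apply pow_nonzero; lra. }
    rewrite E. field. lra.
Qed.

Lemma IS_plus a b A B : infinite_sum a A -> infinite_sum b B ->
  infinite_sum (fun r => a r + b r) (A + B).
Proof.
  intros Ha Hb e He.
  destruct (Ha (e/2)) as [N1 H1]; [lra|]. destruct (Hb (e/2)) as [N2 H2]; [lra|].
  exists (max N1 N2). intros n Hn. rewrite plus_sum. unfold Rdist in *.
  specialize (H1 n ltac:(lia)). specialize (H2 n ltac:(lia)).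
  replace (sum_f_R0 a n + sum_f_R0 b n - (A + B)) with ((sum_f_R0 a n - A) + (sum_f_R0 b n - B)) by ring.
  eapply Rle_lt_trans; [apply Rabs_triang|]. lra.
Qed.

Lemma IS_scal a A c : infinite_sum a A -> infinite_sum (fun r => c * a r) (c * A).
Proof.
  intros Ha e He.
  assert (Hc : 0 < Rabs c + 1) by (generalize (Rabs_pos c); lra).
  destruct (Ha (e / (Rabs c + 1))) as [N H1]; [apply Rdiv_lt_0_compat; lra|].
  exists N. intros n Hn. specialize (H1 n Hn). unfold Rdist in *.
  replace (sum_f_R0 (fun r => c * a r) n) with (c * sum_f_R0 a n).
  2:{ rewrite scal_sum. apply sum_eq; intros; ring. }
  replace (c * sum_f_R0 a n - c * A) with (c * (sum_f_R0 a n - A)) by ring.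
  rewrite Rabs_mult.
  apply Rle_lt_trans with (Rabs c * (e / (Rabs c + 1))).
  - apply Rmult_le_compat_l; [apply Rabs_pos|lra].
  - apply Rlt_le_trans with ((Rabs c + 1) * (e / (Rabs c + 1))).
    + apply Rmult_lt_compat_r; [apply Rdiv_lt_0_compat|]; lra.
    + right; field; lra.
Qed.

Lemma IS_ext a b A : infinite_sum a A -> (forall r, a r = b r) -> infinite_sum b A.
Proof.
  intros H E e He. destruct (H e He) as [N HN]. exists N. intros n Hn.
  rewrite <- (sum_eq a b); auto.
Qed.

Lemma IS_fsum (F : nat -> nat -> R) (Sv : nat -> R) k :
  (forall p, (p <= k)%nat -> infinite_sum (F p) (Sv p)) ->
  infinite_sum (fun r => sum_f_R0 (fun p => F p r) k) (sum_f_R0 Sv k).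
Proof.
  induction k; intros H; simpl.
  - apply H; lia.
  - apply (IS_plus (fun r => sum_f_R0 (fun p => F p r) k) (F (S k))).
    + apply IHk; intros; apply H; lia.
    + apply H; lia.
Qed.

Lemma RI_cte c a b : RI (fun _ => c) a b = c * (b - a).
Proof.
  change (RI (fct_cte c) a b = c * (b - a)).
  rewrite (RI_eq _ _ _ (RiemannInt_P14 a b c)). apply RiemannInt_P15.
Qed.

Lemma sum_zero N : sum_f_R0 (fun _ => 0) N = 0.
Proof. induction N; simpl; [reflexivity| rewrite IHN; ring]. Qed.

Lemma ln2_partial N : exists Rm, 0 <= Rm <= (1/2)^(S N) /\
  sum_f_R0 (fun r => (1/2)^(S r) / INR (S r) ^ 1) N = ln 2 - Rm.
Proof.
  set (f := fun x => sum_f_R0 (fun r => x ^ r) N).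
  set (g := fun x => x ^ (S N) / (1 - x)).
  assert (Cf : CO f 0 (1/2)).
  { intros x Hx. unfold f. apply (C_sum (fun r y => y ^ r)). intros; apply (C_pow (fun y => y)); apply C_id. }
  assert (Cg : CO g 0 (1/2)).
  { intros x Hx. unfold g. apply (C_div (fun y => y ^ S N) (fun y => 1 - y)); [| |lra].
    - apply (C_pow (fun y => y)); apply C_id.
    - apply (C_minus (fun _ => 1) (fun y => y)); [apply C_const|apply C_id]. }
  assert (Ci : CO (fun x => 1 / (1 - x)) 0 (1/2)).
  { intros x Hx. apply (C_div (fun _ => 1) (fun y => 1 - y)) ; [apply C_const| |lra].
    apply (C_minus (fun _ => 1) (fun y => y)); [apply C_const|apply C_id]. }
  assert (pf := RI_int f 0 (1/2) ltac:(lra) Cf).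
  assert (pg := RI_int g 0 (1/2) ltac:(lra) Cg).
  assert (pi := RI_int _ 0 (1/2) ltac:(lra) Ci).
  assert (E1 : RI f 0 (1/2) = sum_f_R0 (fun r => (1/2)^(S r) / INR (S r) ^ 1) N).
  { rewrite (RI_FTC f (fun x => sum_f_R0 (fun r => x ^ S r / INR (S r) ^ 1) N)); [| lra | auto |].
    - rewrite (sum_eq (fun r => 0 ^ S r / INR (S r) ^ 1) (fun _ => 0)); [rewrite sum_zero; ring|].
      intros i _. rewrite pow_i by lia. unfold Rdiv; ring.
    - intros x Hx. unfold f. apply (D_sum (fun r y => y ^ S r / INR (S r) ^ 1)).
      intros i _. eapply D_eqv.
      + apply (D_mult (fun y => y ^ S i) (fun _ => / INR (S i) ^ 1)); [|apply D_const].
        apply (D_pow (fun y => y)); apply D_id.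
      + rewrite pow_1. assert (H := INR_S_pos i). simpl pred. field. lra. }
  assert (E2 : RI f 0 (1/2) = RI (fun x => 1 / (1 - x)) 0 (1/2) + (-1) * RI g 0 (1/2)).
  { rewrite <- RI_lin; auto. apply RI_ext; [lra|auto|].
    intros x Hx. unfold f, g. rewrite tech3 by lra. field. lra. }
  assert (E3 : RI (fun x => 1 / (1 - x)) 0 (1/2) = ln 2).
  { rewrite (RI_FTC _ (fun x => - ln (1 - x))); [| lra | auto |].
    - replace (1 - 1/2) with (1/2) by field. rewrite ln_half. replace (1 - 0) with 1 by ring.
      rewrite ln_1. ring.
    - intros x Hx. eapply D_eqv.
      + apply (D_opp (fun y => ln (1 - y))). apply (D_ln (fun y => 1 - y)); [|lra].
        apply (D_minus (fun _ => 1) (fun y => y)); [apply D_const|apply D_id].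
      + field. lra. }
  exists (RI g 0 (1/2)). split; [split|].
  - apply Rle_trans with (RI (fun _ => 0) 0 (1/2)); [rewrite RI_const0; lra|]. apply RI_le; [lra| |auto|].
    + apply (RiemannInt_P14 0 (1/2) 0).
    + intros x Hx. unfold g. unfold Rdiv; apply Rmult_le_pos; [apply pow_le; lra| apply Rlt_le, Rinv_0_lt_compat; lra].
  - apply Rle_trans with (RI (fun _ => 2 * (1/2) ^ S N) 0 (1/2)).
    + apply RI_le; [lra|auto| apply (RiemannInt_P14 0 (1/2) _)|].
      intros x Hx. unfold g.
      apply Rle_trans with (2 * x ^ S N).
      * apply (Rmult_le_reg_r (1 - x)); [lra|]. unfold Rdiv. rewrite Rmult_assoc, Rinv_l by lra.
        assert (0 <= x ^ S N) by (apply pow_le; lra). nra.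
      * apply Rmult_le_compat_l; [lra|]. apply pow_incr; lra.
    + rewrite RI_cte. lra.
  - rewrite <- E1, E2, E3. ring.
Qed.

Lemma ln2_series : infinite_sum (fun r => (1/2)^(S r) / INR (S r) ^ 1) (ln 2).
Proof.
  intros e He.
  destruct (pow_lt_1_zero (1/2) ltac:(rewrite Rabs_right; lra) e He) as [N HN].
  exists N. intros n Hn. destruct (ln2_partial n) as [Rm [HR E]].
  rewrite E. unfold Rdist.
  specialize (HN (S n) ltac:(lia)). rewrite Rabs_right in HN by (apply Rle_ge, pow_le; lra).
  rewrite Rabs_left1; lra.
Qed.

Lemma sum_scal_r (a : nat -> R) c N : sum_f_R0 (fun i => a i * c) N = sum_f_R0 a N * c.
Proof. induction N; simpl; [reflexivity| rewrite IHN; ring]. Qed.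

Lemma Lbound x : 0 < x <= 1/2 -> 0 <= - ln (1 - x) <= 2 * x.
Proof.
  intros Hx. split.
  - assert (ln (1 - x) <= ln 1) by (apply ln_le'; lra). rewrite ln_1 in H. lra.
  - assert (E : - ln (1 - x) = ln (/ (1 - x))) by (rewrite ln_Rinv; [ring|lra]).
    rewrite E.
    apply Rle_trans with (x / (1 - x)).
    + rewrite <- (ln_exp (x / (1 - x))). apply ln_le'.
      * apply Rinv_0_lt_compat; lra.
      * apply Rle_trans with (1 + x / (1 - x)); [|apply exp_ineq1_le].
        right. field. lra.
    + apply (Rmult_le_reg_r (1 - x)); [lra|]. unfold Rdiv.
      rewrite Rmult_assoc, Rinv_l by lra. nra.
Qed.

Lemma Lk_bound k x : (1 <= k)%nat -> 0 < x <= 1/2 -> (- ln (1 - x)) ^ k / x <= 2 ^ k.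
Proof.
  intros Hk Hx. destruct k as [|k]; [lia|].
  destruct (Lbound x Hx) as [L1 L2].
  apply Rle_trans with ((2 * x) ^ S k / x).
  - unfold Rdiv. apply Rmult_le_compat_r; [apply Rlt_le, Rinv_0_lt_compat; lra|].
    apply pow_incr; lra.
  - rewrite Rpow_mult_distr. simpl (x ^ S k).
    replace (2 ^ S k * (x * x ^ k) / x) with (2 ^ S k * x ^ k) by (field; lra).
    rewrite <- (Rmult_1_r (2 ^ S k)) at 2. apply Rmult_le_compat_l; [apply pow_le; lra|].
    rewrite <- (pow1 k). apply pow_incr; lra.
Qed.

Definition SP k N y := sum_f_R0 (fun r => P r k y) N.

Lemma decomp k N eps : (1 <= k)%nat -> 0 < eps <= 1/2 ->
  exists Rm, 0 <= Rm <= 2 ^ k / INR (S (S N)) /\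
  RI (phi k) eps (1/2) = SP k N (1 - eps) - SP k N (1/2) + Rm.
Proof.
  intros Hk He.
  set (f1 := fun x => sum_f_R0 (fun r => (1 - x) ^ r * (- ln (1 - x)) ^ k) N).
  set (g1 := fun x => (1 - x) ^ (S N) * (- ln (1 - x)) ^ k / x).
  assert (CL : forall x, 0 < x < 1 -> continuity_pt (fun y => - ln (1 - y)) x).
  { intros x Hx. apply (C_comp (fun y => ln (1 - y)) (fun u => - u)).
    - apply (C_ln (fun y => 1 - y)); [|lra].
      apply (C_minus (fun _ => 1) (fun y => y)); [apply C_const|apply C_id].
    - apply (D_cont _ _ _ (D_opp _ _ _ (D_id _))). }
  assert (C1m : forall x n, continuity_pt (fun y => (1 - y) ^ n) x).
  { intros x n. apply (C_pow (fun y => 1 - y)).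
    apply (C_minus (fun _ => 1) (fun y => y)); [apply C_const|apply C_id]. }
  assert (Cf1 : CO f1 eps (1/2)).
  { intros x Hx. unfold f1. apply (C_sum (fun r y => (1 - y) ^ r * (- ln (1 - y)) ^ k)).
    intros i _. apply (C_mult (fun y => (1 - y) ^ i) (fun y => (- ln (1 - y)) ^ k)); auto.
    apply (C_pow (fun y => - ln (1 - y))). apply CL; lra. }
  assert (Cg1 : CO g1 eps (1/2)).
  { intros x Hx. unfold g1.
    apply (C_div (fun y => (1 - y) ^ (S N) * (- ln (1 - y)) ^ k) (fun y => y)); [|apply C_id|lra].
    apply (C_mult (fun y => (1 - y) ^ S N) (fun y => (- ln (1 - y)) ^ k)); auto.
    apply (C_pow (fun y => - ln (1 - y))). apply CL; lra. }
  assert (pf := RI_int f1 eps (1/2) ltac:(lra) Cf1).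
  assert (pg := RI_int g1 eps (1/2) ltac:(lra) Cg1).
  assert (E1 : RI (phi k) eps (1/2) = RI f1 eps (1/2) + 1 * RI g1 eps (1/2)).
  { rewrite <- RI_lin; auto. apply (RI_ext (phi k)); [lra| |].
    - apply RI_int; [lra|]. intros x Hx; apply phi_cont; lra.
    - intros x Hx. unfold phi, f1, g1. rewrite mx_le by lra.
      rewrite (sum_scal_r (fun r => (1 - x) ^ r)). rewrite tech3 by lra. field. lra. }
  assert (E2 : RI f1 eps (1/2) = SP k N (1 - eps) - SP k N (1/2)).
  { rewrite (RI_FTC f1 (fun x => - SP k N (1 - x))); [| lra | auto |].
    - replace (1 - 1/2) with (1/2) by field. ring.
    - intros x Hx. unfold SP. eapply D_eqv.
      + apply (D_opp (fun y => sum_f_R0 (fun r => P r k (1 - y)) N)).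
        apply (D_sum (fun r y => P r k (1 - y)) (fun r => (1 - x) ^ r * (- ln (1 - x)) ^ k * (0 - 1))).
        intros i _. apply (D_comp (fun y => 1 - y) (P i k)).
        * apply (D_minus (fun _ => 1) (fun y => y)); [apply D_const|apply D_id].
        * apply D_P; lra.
      + unfold f1. rewrite (sum_scal_r (fun r => (1 - x) ^ r * (- ln (1 - x)) ^ k)). ring. }
  exists (RI g1 eps (1/2)). split; [split|].
  - apply Rle_trans with (RI (fun _ => 0) eps (1/2)); [rewrite RI_const0; lra|].
    apply RI_le; [lra| apply (RiemannInt_P14 eps (1/2) 0) | auto |].
    intros x Hx. unfold g1. destruct (Lbound x ltac:(lra)).
    unfold Rdiv. apply Rmult_le_pos; [apply Rmult_le_pos; apply pow_le; lra|].
    apply Rlt_le, Rinv_0_lt_compat; lra.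
  - assert (Ch : CO (fun x => 2 ^ k * (1 - x) ^ S N) eps (1/2)).
    { intros x Hx. apply (C_mult (fun _ => 2 ^ k) (fun y => (1 - y) ^ S N)); [apply C_const|auto]. }
    apply Rle_trans with (RI (fun x => 2 ^ k * (1 - x) ^ S N) eps (1/2)).
    + apply RI_le; [lra | auto | apply RI_int; [lra|auto] |].
      intros x Hx. unfold g1.
      replace ((1 - x) ^ S N * (- ln (1 - x)) ^ k / x) with ((1 - x) ^ S N * ((- ln (1 - x)) ^ k / x)) by (field; lra).
      rewrite Rmult_comm. apply Rmult_le_compat_r; [apply pow_le; lra|].
      apply Lk_bound; auto; lra.
    + assert (HS := INR_S_pos (S N)).
      rewrite (RI_FTC _ (fun x => - (2 ^ k * (1 - x) ^ S (S N) / INR (S (S N))))); [| lra | auto |].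
      * assert (0 <= (1/2) ^ S (S N)) by (apply pow_le; lra).
        assert ((1 - eps) ^ S (S N) <= 1) by (apply Rle_trans with (1 ^ S (S N)); [apply pow_incr; lra | rewrite pow1; lra]).
        assert (0 < 2 ^ k) by (apply pow_lt; lra).
        replace (1 - 1/2) with (1/2) by field.
        set (a := (1/2) ^ S (S N)) in *. set (b := (1 - eps) ^ S (S N)) in *.
        unfold Rdiv. assert (0 < / INR (S (S N))) by (apply Rinv_0_lt_compat; lra).
        assert (0 < 2 ^ k * / INR (S (S N))) by (apply Rmult_lt_0_compat; lra).
        nra.
      * intros x Hx. eapply D_eqv.
        -- apply (D_opp (fun y => 2 ^ k * (1 - y) ^ S (S N) / INR (S (S N)))).
           apply (D_mult (fun y => 2 ^ k * (1 - y) ^ S (S N)) (fun _ => / INR (S (S N)))); [|apply D_const].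
           apply (D_mult (fun _ => 2 ^ k) (fun y => (1 - y) ^ S (S N))); [apply D_const|].
           apply (D_pow (fun y => 1 - y)).
           apply (D_minus (fun _ => 1) (fun y => y)); [apply D_const|apply D_id].
        -- simpl pred. field. lra.
  - rewrite E1, E2. ring.
Qed.

Lemma cont_delta f x : continuity_pt f x -> forall e, 0 < e ->
  exists d, 0 < d /\ forall y, Rabs (y - x) < d -> Rabs (f y - f x) < e.
Proof.
  intros H e He. destruct (H e He) as [d [Hd Hy]]. exists d; split; auto.
  intros y Hyx. destruct (Req_dec y x) as [->|Hne].
  - rewrite Rminus_diag, Rabs_R0; auto.
  - apply (Hy y). split; [split; [exact I | auto]|]. simpl; unfold Rdist; auto.
Qed.

Lemma main_limit k J : (1 <= k)%nat -> infinite_sum (fun r => P r k 1 - P r k (1/2)) J ->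
  forall e, 0 < e -> exists d, 0 < d /\ d <= 1/2 /\
    forall eps, 0 < eps < d -> Rabs (RI (phi k) eps (1/2) - J) < e.
Proof.
  intros Hk HJ e He.
  destruct (HJ (e/3)) as [N1 H1]; [lra|].
  destruct (INR_unbounded (3 * 2^k / e)) as [N2 H2].
  set (N := max N1 N2).
  assert (Cs : continuity_pt (SP k N) 1).
  { unfold SP; apply (C_sum (fun r y => P r k y)); intros; apply P_cont; lra. }
  destruct (cont_delta _ _ Cs (e/3)) as [d0 [Hd0 Hc]]; [lra|].
  exists (Rmin d0 (1/2)). split; [apply Rmin_pos; lra|]. split; [apply Rmin_r|].
  intros eps Heps.
  assert (Hm1 := Rmin_l d0 (1/2)). assert (Hm2 := Rmin_r d0 (1/2)).
  destruct (decomp k N eps Hk) as [Rm [HR E]]; [lra|].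
  rewrite E.
  specialize (H1 N ltac:(unfold N; lia)). unfold Rdist in H1. rewrite minus_sum in H1. fold (SP k N 1) (SP k N (1/2)) in H1.
  specialize (Hc (1 - eps)). rewrite Rabs_left in Hc by lra.
  specialize (Hc ltac:(lra)).
  assert (HB : 2 ^ k / INR (S (S N)) < e / 3).
  { assert (INR N2 <= INR (S (S N))) by (apply le_INR; unfold N; lia).
    assert (0 < 2 ^ k) by (apply pow_lt; lra).
    assert (0 < INR (S (S N))) by (apply lt_0_INR; lia).
    apply (Rmult_lt_reg_r (INR (S (S N)))); [lra|].
    unfold Rdiv. rewrite Rmult_assoc, Rinv_l by lra.
    assert (3 * 2 ^ k / e < INR (S (S N))) by lra.
    apply (Rmult_lt_reg_r (3 / e)); [apply Rdiv_lt_0_compat; lra|].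
    replace (2 ^ k * 1 * (3 / e)) with (3 * 2 ^ k / e) by (field; lra).
    replace (e * / 3 * INR (S (S N)) * (3 / e)) with (INR (S (S N))) by (field; lra). lra. }
  apply Rabs_def2 in H1. apply Rabs_def2 in Hc.
  apply Rabs_def1; lra.
Qed.

Definition Lv (li : nat -> R) k p := if lt_dec p k then li (S k - p)%nat else ln 2.
Definition Jv (li : nat -> R) z k := INR (fact k) * z - sum_f_R0 (fun p => Pc k p * Lv li k p) k.

Lemma HT_alg (li : nat -> R) z k : (1 <= k)%nat ->
  INR (fact (S k)) * z - INR (S k - 1) * (ln 2) ^ (S k)
     - INR (fact (S k)) *
       sum_f_R0 (fun p => (ln 2) ^ p / INR (fact p) * li (S k - p)%nat) (S k - 2)
  = ln 2 ^ S k + INR (S k) * Jv li z k.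
Proof.
  intros Hk. destruct k as [|k']; [lia|].
  replace (S (S k') - 1)%nat with (S k') by lia.
  replace (S (S k') - 2)%nat with k' by lia.
  assert (Hf1 : 0 < INR (fact (S k'))) by (apply lt_0_INR; apply lt_O_fact).
  assert (Hs : INR (S (S k')) * sum_f_R0 (fun p => Pc (S k') p * Lv li (S k') p) k' =
               INR (fact (S (S k'))) * sum_f_R0 (fun p => ln 2 ^ p / INR (fact p) * li (S (S k') - p)%nat) k').
  { rewrite !scal_sum. apply sum_eq. intros p Hp. unfold Lv, Pc. destruct (lt_dec p (S k')); [|lia].
    rewrite (fact_simpl (S k')), mult_INR.
    assert (0 < INR (fact p)) by (apply lt_0_INR; apply lt_O_fact). field. lra. }
  unfold Jv. rewrite tech5.
  assert (Hl : Pc (S k') (S k') * Lv li (S k') (S k') = ln 2 ^ S (S k')).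
  { unfold Pc, Lv. destruct (lt_dec (S k') (S k')); [lia|]. rewrite <- !tech_pow_Rmult. field. lra. }
  rewrite Hl.
  replace (INR (S (S k')) * (INR (fact (S k')) * z - (sum_f_R0 (fun p => Pc (S k') p * Lv li (S k') p) k' + ln 2 ^ S (S k'))))
    with (INR (S (S k')) * INR (fact (S k')) * z - INR (S (S k')) * sum_f_R0 (fun p => Pc (S k') p * Lv li (S k') p) k' - INR (S (S k')) * ln 2 ^ S (S k')) by ring.
  rewrite Hs. rewrite (fact_simpl (S k')), mult_INR. rewrite (S_INR (S k')). ring.
Qed.

Theorem theorem7 (m : nat) (hm : (2 <= m)%nat)
  (z : R) (hz : is_zeta m z)
  (li : nat -> R) (hli : forall s, (2 <= s)%nat -> is_Li_half s (li s)) :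
  Lm_is m
    (INR (fact m) * z - INR (m - 1) * (ln 2) ^ m
     - INR (fact m) *
       sum_f_R0 (fun p => (ln 2) ^ p / INR (fact p) * li (m - p)%nat) (m - 2)).
Proof.
  destruct m as [|k]; [lia|]. assert (Hk : (1 <= k)%nat) by lia.
  assert (HJ : infinite_sum (fun r => P r k 1 - P r k (1/2)) (Jv li z k)).
  { apply (IS_ext (fun r => INR (fact k) * (1 / INR (S r) ^ S k) + (-1) * sum_f_R0 (fun p => Pc k p * Pa k p r) k)).
    - replace (Jv li z k) with (INR (fact k) * z + (-1) * sum_f_R0 (fun p => Pc k p * Lv li k p) k) by (unfold Jv; ring).
      apply IS_plus.
      + apply IS_scal. exact hz.
      + apply IS_scal. apply (IS_fsum (fun p r => Pc k p * Pa k p r)). intros p Hp. apply IS_scal.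
        unfold Lv. destruct (lt_dec p k).
        * apply (hli (S k - p)%nat). lia.
        * assert (p = k) by lia; subst p.
          apply (IS_ext _ _ _ ln2_series). intros r; unfold Pa.
          replace (S k - k)%nat with 1%nat by lia; reflexivity.
    - intros r. rewrite P_one, P_half. ring. }
  rewrite (HT_alg li z k Hk).
  split.
  - intros eps Heps. destruct (Rle_dec eps 1).
    + exists (1 * Hf (S k) eps). exact (key (S k) eps 1 ltac:(lra)).
    + exists 0. exact (iter_big k eps 1 ltac:(lra)).
  - intros e He.
    assert (HSk : 0 < INR (S k)) by (apply lt_0_INR; lia).
    destruct (main_limit k (Jv li z k) Hk HJ (e / INR (S k))) as [d [Hd [Hd2 Hdd]]];
      [apply Rdiv_lt_0_compat; lra|].
    exists d. split; auto. intros eps v Heps Hv.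
    assert (Ev : v = 1 * Hf (S k) eps).
    { apply (iter_uniq (S k) (trunc_integrand eps (S k))); auto.
      exact (key (S k) eps 1 ltac:(lra)). }
    subst v. unfold Hf. simpl pred.
    replace (1 * (ln 2 ^ S k + INR (S k) * RI (phi k) eps (1 / 2)) - (ln 2 ^ S k + INR (S k) * Jv li z k))
      with (INR (S k) * (RI (phi k) eps (1 / 2) - Jv li z k)) by ring.
    rewrite Rabs_mult, (Rabs_right (INR (S k))) by lra.
    specialize (Hdd eps Heps).
    apply (Rmult_lt_compat_l (INR (S k))) in Hdd; auto.
    replace (INR (S k) * (e / INR (S k))) with e in Hdd by (field; lra). exact Hdd.
Qed.
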